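(* Let $c,d$ be comonoids in $(\mathbf{Poly},\mathcal{y},\triangleleft)$ and let $e$ be a comonad on $c$ in $\mathbb{C}\mathbf{at}^\sharp$, i.e. a $(c,c)$-bicomodule with bicomodule maps $e\to c$ and $e\to e\triangleleft_c e$ satisfying counit and coassociativity laws; then the carrier polynomial $e$ is itself a comonoid in $\mathbf{Poly}$ equipped with a comonoid homomorphism $e\to c$. Under these hypotheses there is an equivalence, preserving underlying carrier polynomials, between $(e,d)$-bicomodules and $(c,d)$-bicomodules equipped with the structure of a left $e$-comodule (a $(c,d)$-bicomodule map $p\to e\triangleleft_c p$ satisfying counit and coassociativity).
   Context: Polynomials $p=\sum_{I\in p(1)}\mathcal{y}^{p[I]}$ form $\mathbf{Poly}$ with composition product $\triangleleft$ and unit $\mathcal{y}$ (one position, one direction); comonoids in $(\mathbf{Poly},\mathcal{y},\triangleleft)$ are small categories and comonoid homomorphisms are cofunctors. For comonoids $c,d$, a $(c,d)$-bicomodule is a polynomial $p$ with compatible coassociative counital coactions $p\to c\triangleleft p$ and $p\to p\triangleleft d$. $\mathbb{C}\mathbf{at}^\sharp$ is the pseudo-double category with objects comonoids, vertical morphisms comonoid homomorphisms, horizontal morphisms bicomodules composed by $p\triangleleft_dq$ (equalizer of $p\triangleleft q\rightrightarrows p\triangleleft d\triangleleft q$), horizontal identity on $c$ the bicomodule $c$, and squares polynomial maps compatible with coactions. *)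

(* Defs.v *)
Set Implicit Arguments.

(** A polynomial [p = sum_{i : pos p} y^{dir p i}]. *)
Record Poly : Type := mkPoly { pos : Type; dir : pos -> Type }.
Arguments mkPoly : clear implicits.

(** A map of polynomials [p -> q]: forward on positions, backward on
    directions.  (Hom(p,q) = prod_i sum_j p[i]^{q[j]}.) *)
Definition Map (p q : Poly) : Type :=
  forall i : pos p, { j : pos q & dir q j -> dir p i }.

Definition idm (p : Poly) : Map p p :=
  fun i => existT (fun j => dir p j -> dir p i) i (fun a => a).

Definition comp (p q r : Poly) (g : Map q r) (f : Map p q) : Map p r :=
  fun i =>
    existT (fun k => dir r k -> dir p i)
      (projT1 (g (projT1 (f i))))
      (fun z => projT2 (f i) (projT2 (g (projT1 (f i))) z)).
Arguments comp {p q r} g f.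

Definition yP : Poly := mkPoly unit (fun _ => unit).

Definition tri (p q : Poly) : Poly :=
  mkPoly { i : pos p & dir p i -> pos q }
         (fun ig => { a : dir p (projT1 ig) & dir q (projT2 ig a) }).
Infix "◁" := tri (at level 40, left associativity).

Definition trim (p p' q q' : Poly) (f : Map p p') (g : Map q q')
  : Map (p ◁ q) (p' ◁ q') :=
  fun ih =>
    existT (fun jk : pos (p' ◁ q') => dir (p' ◁ q') jk -> dir (p ◁ q) ih)
      (existT (fun j => dir p' j -> pos q')
         (projT1 (f (projT1 ih)))
         (fun a' => projT1 (g (projT2 ih (projT2 (f (projT1 ih)) a')))))
      (fun d =>
         existT (fun a => dir q (projT2 ih a))
           (projT2 (f (projT1 ih)) (projT1 d))
           (projT2 (g (projT2 ih (projT2 (f (projT1 ih)) (projT1 d)))) (projT2 d))).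
Arguments trim {p p' q q'} f g.

Definition assoc (p q r : Poly) : Map ((p ◁ q) ◁ r) (p ◁ (q ◁ r)) :=
  fun x =>
    existT (fun jk : pos (p ◁ (q ◁ r)) => dir (p ◁ (q ◁ r)) jk -> dir ((p ◁ q) ◁ r) x)
      (existT (fun i => dir p i -> pos (q ◁ r))
         (projT1 (projT1 x))
         (fun a => existT (fun j => dir q j -> pos r)
                     (projT2 (projT1 x) a)
                     (fun b => projT2 x (existT (fun a0 => dir q (projT2 (projT1 x) a0)) a b))))
      (fun d =>
         existT (fun ab : dir (p ◁ q) (projT1 x) => dir r (projT2 x ab))
           (existT (fun a0 => dir q (projT2 (projT1 x) a0)) (projT1 d) (projT1 (projT2 d)))
           (projT2 (projT2 d))).
Arguments assoc {p q r}.

Definition lunit (p : Poly) : Map (yP ◁ p) p :=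
  fun x => existT (fun j => dir p j -> dir (yP ◁ p) x) (projT2 x tt)
             (fun a => existT (fun u => dir p (projT2 x u)) tt a).
Definition runit (p : Poly) : Map (p ◁ yP) p :=
  fun x => existT (fun j => dir p j -> dir (p ◁ yP) x) (projT1 x)
             (fun a => existT (fun _ => unit) a tt).
Arguments lunit {p}.
Arguments runit {p}.

Definition is_comonoid (c : Poly) (eps : Map c yP) (del : Map c (c ◁ c)) : Prop :=
  comp lunit (comp (trim eps (idm c)) del) = idm c
  /\ comp runit (comp (trim (idm c) eps) del) = idm c
  /\ comp assoc (comp (trim del (idm c)) del) = comp (trim (idm c) del) del.

Record Comonoid : Type := mkComonoid {
  carrier : Poly;
  eps : Map carrier yP;
  del : Map carrier (carrier ◁ carrier);
  comonoid_laws : is_comonoid eps del }.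

Definition is_cohom (C C' : Comonoid) (f : Map (carrier C) (carrier C')) : Prop :=
  comp (eps C') f = eps C /\ comp (del C') f = comp (trim f f) (del C).

Record Bicomod (C D : Comonoid) (p : Poly) : Type := mkBicomod {
  lco : Map p (carrier C ◁ p);
  rco : Map p (p ◁ carrier D);
  lco_counit : comp lunit (comp (trim (eps C) (idm p)) lco) = idm p;
  lco_coassoc : comp assoc (comp (trim (del C) (idm p)) lco)
                = comp (trim (idm (carrier C)) lco) lco;
  rco_counit : comp runit (comp (trim (idm p) (eps D)) rco) = idm p;
  rco_coassoc : comp assoc (comp (trim rco (idm (carrier D))) rco)
                = comp (trim (idm p) (del D)) rco;
  lr_compat : comp assoc (comp (trim lco (idm (carrier D))) rco)
              = comp (trim (idm (carrier C)) rco) lco }.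
Arguments lco {C D p}.
Arguments rco {C D p}.

Definition is_bimap (C D : Comonoid) (p q : Poly)
  (P : Bicomod C D p) (Q : Bicomod C D q) (f : Map p q) : Prop :=
  comp (lco Q) f = comp (trim (idm (carrier C)) f) (lco P)
  /\ comp (rco Q) f = comp (trim f (idm (carrier D))) (rco P).

Definition regBicomod (C : Comonoid) : Bicomod C C (carrier C).
Proof.
  destruct C as [c e d [H1 [H2 H3]]]; simpl.
  exact (@mkBicomod (mkComonoid (conj H1 (conj H2 H3)))
                    (mkComonoid (conj H1 (conj H2 H3))) c d d H1 H3 H2 H3 H3).
Defined.

(** Maps into the composite [e ◁_C q] (the equalizer of
    [e ◁ q ⇉ e ◁ C ◁ q]) are represented by maps into [e ◁ q] that equalize
    the parallel pair; since the equalizer inclusion is monic (and [◁]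
    preserves monos), equations between maps into such composites are stated
    after composing with the inclusions. *)

Definition equalizes (C D D' : Comonoid) (e q : Poly)
  (Be : Bicomod C D e) (Bq : Bicomod D D' q) (X : Poly) (f : Map X (e ◁ q)) : Prop :=
  comp assoc (comp (trim (rco Be) (idm q)) f) = comp (trim (idm e) (lco Bq)) f.

Record Comonad (C : Comonoid) : Type := mkComonad {
  cm : Poly;
  cm_bi : Bicomod C C cm;
  cm_eps : Map cm (carrier C);
  cm_eps_bimap : is_bimap cm_bi (regBicomod C) cm_eps;
  cm_del : Map cm (cm ◁ cm);
  cm_del_eq : equalizes cm_bi cm_bi cm_del;
  cm_del_bimap_l : comp assoc (comp (trim (lco cm_bi) (idm cm)) cm_del)
                   = comp (trim (idm (carrier C)) cm_del) (lco cm_bi);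
  cm_del_bimap_r : comp (trim (idm cm) (rco cm_bi)) cm_del
                   = comp assoc (comp (trim cm_del (idm (carrier C))) (rco cm_bi));
  (* counit laws: (ε ◁_C e) ∘ δ ≅ id, (e ◁_C ε) ∘ δ ≅ id *)
  cm_counit_l : comp (trim cm_eps (idm cm)) cm_del = lco cm_bi;
  cm_counit_r : comp (trim (idm cm) cm_eps) cm_del = rco cm_bi;
  cm_coassoc : comp assoc (comp (trim cm_del (idm cm)) cm_del)
               = comp (trim (idm cm) cm_del) cm_del }.
Arguments cm {C}.
Arguments cm_bi {C}.
Arguments cm_eps {C}.
Arguments cm_del {C}.

Definition inducedComonoid (C : Comonoid) (E : Comonad C)
  (H : is_comonoid (comp (eps C) (cm_eps E)) (cm_del E)) : Comonoid :=
  mkComonoid H.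
Arguments inducedComonoid {C E} H.

Record ECBicomod (C D : Comonoid) (E : Comonad C) (p : Poly) : Type := mkECBicomod {
  ecb : Bicomod C D p;
  mu : Map p (cm E ◁ p);
  mu_eq : equalizes (cm_bi E) ecb mu;
  mu_bimap_l : comp assoc (comp (trim (lco (cm_bi E)) (idm p)) mu)
               = comp (trim (idm (carrier C)) mu) (lco ecb);
  mu_bimap_r : comp (trim (idm (cm E)) (rco ecb)) mu
               = comp assoc (comp (trim mu (idm (carrier D))) (rco ecb));
  (* counit: (ε ◁_C p) ∘ mu ≅ id *)
  mu_counit : comp (trim (cm_eps E) (idm p)) mu = lco ecb;
  mu_coassoc : comp assoc (comp (trim (cm_del E) (idm p)) mu)
               = comp (trim (idm (cm E)) mu) mu }.
Arguments ecb {C D E p}.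
Arguments mu {C D E p}.

Definition is_ecmap (C D : Comonoid) (E : Comonad C) (p q : Poly)
  (P : ECBicomod D E p) (Q : ECBicomod D E q) (f : Map p q) : Prop :=
  is_bimap (ecb P) (ecb Q) f /\ comp (mu Q) f = comp (trim (idm (cm E)) f) (mu P).

(* Main.v *)
Require Import Defs.
From Stdlib Require Import FunctionalExtensionality ProofIrrelevance.
Set Implicit Arguments.
Lemma comp_idl (p q : Poly) (f : Map p q) : comp (idm q) f = f.
Proof. apply functional_extensionality_dep; intro i; unfold comp, idm; simpl; destruct (f i); reflexivity. Qed.
Lemma comp_idr (p q : Poly) (f : Map p q) : comp f (idm p) = f.
Proof. apply functional_extensionality_dep; intro i; unfold comp, idm; simpl; destruct (f i); reflexivity. Qed.
Lemma trim_id (p q : Poly) : trim (idm p) (idm q) = idm (p ◁ q).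
Proof. apply functional_extensionality_dep; intros [i h]; unfold trim, idm; simpl.
 f_equal. apply functional_extensionality; intros [a b]; reflexivity. Qed.
Lemma comp_assoc (p q r s : Poly) (h : Map r s) (g : Map q r) (f : Map p q) :
  comp h (comp g f) = comp (comp h g) f.
Proof. reflexivity. Qed.
Lemma trim_comp (p p' p'' q q' q'' : Poly) (f : Map p' p'') (f' : Map p p') (g : Map q' q'') (g' : Map q q') :
  comp (trim f g) (trim f' g') = trim (comp f f') (comp g g').
Proof. reflexivity. Qed.
Lemma assoc_nat (p p' q q' r r' : Poly) (f : Map p p') (g : Map q q') (h : Map r r') :
  comp assoc (trim (trim f g) h) = comp (trim f (trim g h)) assoc.
Proof. reflexivity. Qed.

Lemma tl (p q r s X : Poly) (f : Map q r) (f' : Map p q) (k : Map X (p ◁ s)) :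
  comp (trim f (idm s)) (comp (trim f' (idm s)) k) = comp (trim (comp f f') (idm s)) k.
Proof. change (comp (trim (comp f f') (comp (idm s) (idm s))) k = comp (trim (comp f f') (idm s)) k).
  rewrite comp_idl; reflexivity. Qed.
Lemma tr (p q r s X : Poly) (g : Map q r) (g' : Map p q) (k : Map X (s ◁ p)) :
  comp (trim (idm s) g) (comp (trim (idm s) g') k) = comp (trim (idm s) (comp g g')) k.
Proof. change (comp (trim (comp (idm s) (idm s)) (comp g g')) k = comp (trim (idm s) (comp g g')) k).
  rewrite comp_idl; reflexivity. Qed.
Lemma tlr (p p' q q' X : Poly) (f : Map p p') (g : Map q q') (k : Map X (p ◁ q)) :
  comp (trim f (idm q')) (comp (trim (idm p) g) k) = comp (trim f g) k.
Proof. change (comp (trim (comp f (idm p)) (comp (idm q') g)) k = comp (trim f g) k).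
  rewrite comp_idl, comp_idr; reflexivity. Qed.
Lemma trl (p p' q q' X : Poly) (f : Map p p') (g : Map q q') (k : Map X (p ◁ q)) :
  comp (trim (idm p') g) (comp (trim f (idm q)) k) = comp (trim f g) k.
Proof. change (comp (trim (comp (idm p') f) (comp g (idm q))) k = comp (trim f g) k).
  rewrite comp_idl, comp_idr; reflexivity. Qed.

Section S.
Variables (c e p d : Poly) (eC : Map c yP) (dC : Map c (c ◁ c)) (ε : Map e c)
  (δ : Map e (e ◁ e)) (λe : Map e (c ◁ e)) (ρe : Map e (e ◁ c))
  (cohom : comp dC ε = comp (trim ε ε) δ)
  (Hcl : comp (trim ε (idm e)) δ = λe) (Hcr : comp (trim (idm e) ε) δ = ρe)
  (λ : Map p (e ◁ p)) (ρ : Map p (p ◁ d))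
  (Hco : comp assoc (comp (trim δ (idm p)) λ) = comp (trim (idm e) λ) λ)
  (Hλρ : comp assoc (comp (trim λ (idm d)) ρ) = comp (trim (idm e) ρ) λ).

Lemma F_coassoc : comp assoc (comp (trim dC (idm p)) (comp (trim ε (idm p)) λ))
  = comp (trim (idm c) (comp (trim ε (idm p)) λ)) (comp (trim ε (idm p)) λ).
Proof.
  rewrite tl, cohom, <- (tl (trim ε ε) δ λ), comp_assoc, assoc_nat, <- comp_assoc, Hco.
  rewrite trl, comp_assoc, trim_comp, comp_idr. reflexivity.
Qed.

Lemma F_compat : comp assoc (comp (trim (comp (trim ε (idm p)) λ) (idm d)) ρ)
  = comp (trim (idm c) ρ) (comp (trim ε (idm p)) λ).
Proof.
  rewrite <- (tl (trim ε (idm p)) λ ρ), comp_assoc, assoc_nat, trim_id, <- comp_assoc, Hλρ.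
  rewrite trl, comp_assoc, trim_comp, comp_idr, comp_idl. reflexivity.
Qed.

Lemma F_eq : comp assoc (comp (trim ρe (idm p)) λ)
  = comp (trim (idm e) (comp (trim ε (idm p)) λ)) λ.
Proof.
  rewrite <- Hcr, <- (tl (trim (idm e) ε) δ λ), comp_assoc, assoc_nat, <- comp_assoc, Hco.
  rewrite tr. reflexivity.
Qed.

Lemma F_bl : comp assoc (comp (trim λe (idm p)) λ)
  = comp (trim (idm c) λ) (comp (trim ε (idm p)) λ).
Proof.
  rewrite <- Hcl, <- (tl (trim ε (idm e)) δ λ), comp_assoc, assoc_nat, <- comp_assoc, Hco.
  rewrite trim_id, tlr, trl. reflexivity.
Qed.

End S.

Lemma F_counit (c e p : Poly) (eC : Map c yP) (ε : Map e c) (λ : Map p (e ◁ p))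
  (H : comp lunit (comp (trim (comp eC ε) (idm p)) λ) = idm p) :
  comp lunit (comp (trim eC (idm p)) (comp (trim ε (idm p)) λ)) = idm p.
Proof. rewrite tl. exact H. Qed.

Lemma G_counit (c e p : Poly) (eC : Map c yP) (ε : Map e c) (μ : Map p (e ◁ p)) (l : Map p (c ◁ p))
  (Hmc : comp (trim ε (idm p)) μ = l) (Hlc : comp lunit (comp (trim eC (idm p)) l) = idm p) :
  comp lunit (comp (trim (comp eC ε) (idm p)) μ) = idm p.
Proof. rewrite <- tl, Hmc. exact Hlc. Qed.

Lemma bm_l (c e p q : Poly) (ε : Map e c) (lx : Map p (e ◁ p)) (ly : Map q (e ◁ q)) (f : Map p q)
  (Hl : comp ly f = comp (trim (idm e) f) lx) :
  comp (comp (trim ε (idm q)) ly) f = comp (trim (idm c) f) (comp (trim ε (idm p)) lx).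
Proof. change (comp (trim ε (idm q)) (comp ly f) = comp (trim (idm c) f) (comp (trim ε (idm p)) lx)).
  rewrite Hl, tlr, trl. reflexivity. Qed.

Lemma bicomod_eq (C D : Comonoid) (p : Poly) (x y : Bicomod C D p) :
  lco x = lco y -> rco x = rco y -> x = y.
Proof. destruct x, y; simpl; intros; subst. f_equal; apply proof_irrelevance. Qed.

Lemma ecbicomod_eq (C D : Comonoid) (E : Comonad C) (p : Poly) (x y : ECBicomod D E p) :
  ecb x = ecb y -> mu x = mu y -> x = y.
Proof. destruct x, y; simpl; intros; subst. f_equal; apply proof_irrelevance. Qed.

Theorem mainTheorem6 (C D : Comonoid) (E : Comonad C) :
  exists H : is_comonoid (comp (eps C) (cm_eps E)) (cm_del E),
    is_cohom (inducedComonoid H) C (cm_eps E) /\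
    exists (F : forall p : Poly, Bicomod (inducedComonoid H) D p -> ECBicomod D E p)
           (G : forall p : Poly, ECBicomod D E p -> Bicomod (inducedComonoid H) D p),
      (forall p (x : Bicomod (inducedComonoid H) D p), G p (F p x) = x) /\
      (forall p (y : ECBicomod D E p), F p (G p y) = y) /\
      (forall p q (x : Bicomod (inducedComonoid H) D p)
              (y : Bicomod (inducedComonoid H) D q) (f : Map p q),
          is_bimap x y f <-> is_ecmap (F p x) (F q y) f).
Proof.
  destruct C as [c eC dC [HC1 [HC2 HC3]]].
  destruct E as [e Be ε [Hεl Hεr] δ Hδeq Hδl Hδr Hcl Hcr Hca].
  destruct Be as [λe ρe Hλ1 Hλ2 Hρ1 Hρ2 Hλρ]; simpl in *.
  assert (H : is_comonoid (comp eC ε) δ).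
  { split; [|split].
    - rewrite <- (tl eC ε δ), Hcl. exact Hλ1.
    - rewrite <- (tr eC ε δ), Hcr. exact Hρ1.
    - exact Hca. }
  exists H.
  assert (cohom : comp dC ε = comp (trim ε ε) δ).
  { rewrite Hεl, <- Hcl, trl. reflexivity. }
  split; [split; [reflexivity| exact cohom]|].
  unshelve refine (ex_intro _ _ _).
  intros p x. unshelve refine (@mkECBicomod _ D _ p _ (lco x) _ _ _ _ _).
  1: match goal with |- Bicomod ?C0 _ _ => refine (@mkBicomod C0 D p (comp (trim ε (idm p)) (lco x)) (rco x) _ _ _ _ _) end.
  all: simpl.
  - exact (F_counit (lco_counit x)).
  - exact (F_coassoc cohom (lco_coassoc x)).
  - exact (rco_counit x).
  - exact (rco_coassoc x).
  - exact (F_compat ε (lr_compat x)).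
  - exact (F_eq Hcr (lco_coassoc x)).
  - exact (F_bl Hcl (lco_coassoc x)).
  - symmetry; exact (lr_compat x).
  - reflexivity.
  - exact (lco_coassoc x).
  - unshelve refine (ex_intro _ _ _).
    { intros p y. simpl in y.
      match goal with |- Bicomod ?C0 _ _ => refine (@mkBicomod C0 D p (mu y) (rco (ecb y)) _ _ _ _ _) end.
      all: simpl.
      - exact (G_counit (mu_counit y) (lco_counit (ecb y))).
      - exact (mu_coassoc y).
      - exact (rco_counit (ecb y)).
      - exact (rco_coassoc (ecb y)).
      - symmetry; exact (mu_bimap_r y). }
    split; [|split].
    + intros p x. apply bicomod_eq; reflexivity.
    + intros p y. apply ecbicomod_eq; [apply bicomod_eq|]; simpl; try reflexivity.
      exact (mu_counit y).
    + intros p q x y f; unfold is_ecmap, is_bimap; simpl; split.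
      * intros [Hl Hr]; split; [split|]; auto. exact (bm_l ε Hl).
      * intros [[_ Hr] Hl]; split; auto.
Qed.
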